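(* Let $n\ge 2$, $\rho>0$, $\varepsilon\in[0,1]$, and let $F_1,\dots,F_n$ be continuous distributions on $\mathbb{R}$, each with a monotone density. For any joint distribution of channel gains $(|h_1|^2,\dots,|h_n|^2)$ with $|h_i|^2\sim F_i$ for each $i$, the $\varepsilon$-outage capacity $R^{\varepsilon}$ satisfies $$\log_2\bigl(1-\rho\,\Phi_{-}(1-\varepsilon)\bigr)\le R^{\varepsilon}\le\log_2\bigl(1+\rho\,\Phi(\varepsilon)\bigr).$$
   Context: $R^{\varepsilon}=\sup\{R\ge0:\Pr(\sum_{i=1}^n|h_i|^2<(2^R-1)/\rho)<\varepsilon\}$. With $G_i=F_i^{-1}$ and $X_i\sim F_i$, define $\Phi(a)=\sum_{i=1}^n\mathbb{E}[X_i\mid X_i\ge G_i(a)]$. The function $\Phi_{-}$ is $\Phi$ computed for the random variables $-X_i$, i.e. $\Phi_{-}(a)=\sum_{i=1}^n\mathbb{E}[-X_i\mid -X_i\ge G_{i,-}(a)]$ where $G_{i,-}(x)=-G_i(1-x)$ is the quantile function of $-X_i$. *)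

(* Defs.v *)
From HB Require Import structures.
From mathcomp Require Import all_boot all_order all_algebra.
From mathcomp Require Import all_classical all_reals all_analysis.
Set Implicit Arguments. Unset Strict Implicit. Unset Printing Implicit Defensive.
Import Order.TTheory GRing.Theory Num.Theory.
Import numFieldNormedType.Exports.
Local Open Scope classical_set_scope.
Local Open Scope ring_scope.

Section Defs.
Context {d : measure_display} {T : measurableType d} {R : realType}.
Variable P : probability T R.

Definition log2 (x : R) : R := ln x / ln 2.

Definition elog2 (x : \bar R) : \bar R :=
  match x with
  | EFin r => (log2 r)%:E
  | +oo%E => +oo%E
  | -oo%E => -oo%E
  end.

Definition is_density (Y : {RV P >-> R}) (f : R -> R) : Prop :=
  [/\ (forall x, 0 <= f x), measurable_fun [set: R] f &
      forall A : set R, measurable A ->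
        P (Y @^-1` A) = (\int[lebesgue_measure]_(x in A) (f x)%:E)%E].

Definition monotone_density (f : R -> R) : Prop :=
  exists I : interval R,
    (forall x, x \notin I -> f x = 0) /\
    ((forall x y, x \in I -> y \in I -> x <= y -> f x <= f y) \/
     (forall x y, x \in I -> y \in I -> x <= y -> f y <= f x)).

Definition quantile (Y : {RV P >-> R}) (a : R) : R :=
  inf [set x : R | (a%:E <= cdf Y x)%E].

Definition cond_exp_ge (Z : T -> R) (c : R) : \bar R :=
  let A := [set w | c <= Z w] in
  ((\int[P]_(w in A) (Z w)%:E) * ((fine (P A))^-1)%:E)%E.

Definition Phi (n : nat) (X : 'I_n -> {RV P >-> R}) (a : R) : \bar R :=
  (\sum_(i < n) cond_exp_ge (X i) (quantile (X i) a))%E.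

(* Phi_-(a) = sum_i E[-X_i | -X_i >= G_{i,-}(a)],  G_{i,-}(x) = - G_i(1 - x) *)
Definition Phi_minus (n : nat) (X : 'I_n -> {RV P >-> R}) (a : R) : \bar R :=
  (\sum_(i < n) cond_exp_ge (fun w => (- X i w)%R) (- quantile (X i) (1 - a))%R)%E.

Definition outage_capacity (n : nat) (X : 'I_n -> {RV P >-> R})
    (rho eps : R) : R :=
  sup [set r : R | 0 <= r /\
         (P [set w | (\sum_(i < n) X i w < (2 `^ r - 1) / rho)%R] < eps%:E)%E].

End Defs.

(* Main.v *)
Require Import Defs.
From HB Require Import structures.
From mathcomp Require Import all_boot all_order all_algebra.
From mathcomp Require Import all_classical all_reals all_analysis.
From mathcomp Require Import measurable_realfun ring lra.
Import Order.TTheory GRing.Theory Num.Theory.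
Import numFieldNormedType.Exports.
Local Open Scope classical_set_scope.
Local Open Scope ring_scope.

Section Helpers.
Context {R : realType}.

Lemma cvg_le_ev {U : Type} (F : set_system U) {PF : ProperFilter F}
  (g : U -> \bar R) (l x : \bar R) :
  g @ F --> l -> (\forall y \near F, (g y <= x)%E) -> (l <= x)%E.
Proof.
move=> gl H; rewrite -(cvg_lim _ gl) //; apply: lime_le => //.
by apply/cvg_ex; exists l.
Qed.

Lemma cvg_ge_ev {U : Type} (F : set_system U) {PF : ProperFilter F}
  (g : U -> \bar R) (l x : \bar R) :
  g @ F --> l -> (\forall y \near F, (x <= g y)%E) -> (x <= l)%E.
Proof.
move=> gl H; rewrite -(cvg_lim _ gl) //; apply: lime_ge => //.
by apply/cvg_ex; exists l.
Qed.

Lemma aux1 (y q a : R) : y <= q - a -> 0 < a -> y < q. Proof. lra. Qed.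
Lemma aux2 (y q a : R) : a <= q - y -> y <= q - a. Proof. lra. Qed.
Lemma aux3 (q a : R) : 0 < a -> q - a < q. Proof. lra. Qed.
Lemma invS_gt0 (k : nat) : 0 < (k.+1%:R)^-1 :> R.
Proof. by rewrite invr_gt0 ltr0Sn. Qed.
Lemma ineqU (e1 e2 e3 m x1 x2 q : R) : 0 <= q -> 0 <= m -> 0 <= x1 -> 0 <= x2 ->
  e2 <= q * x1 -> q * x2 <= e3 -> q * m <= e1 -> m + x2 <= m + x1 -> 0 < m + x2 ->
  e1 + e2 <= (m + x1) * ((e1 + e3) * (m + x2)^-1).
Proof.
move=> q0 m0 x10 x20 h1 h2 h3 h4 h5.
rewrite mulrA ler_pdivlMr //.
have : 0 <= (x1 - x2) * (e1 - q * m) by apply: mulr_ge0; lra.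
have : 0 <= (q * x1 - e2) * (m + x2) by apply: mulr_ge0; lra.
have : 0 <= (e3 - q * x2) * (m + x1) by apply: mulr_ge0; lra.
nra.
Qed.
Lemma ineqL (e1 e2 e3 m y1 y2 q : R) : 0 <= q -> 0 <= m -> 0 <= y1 -> 0 <= y2 ->
  q * y1 <= e2 -> e3 <= q * y2 -> e1 <= q * m -> m + y2 <= m + y1 -> 0 < m + y2 ->
  (m + y1) * ((e1 + e3) * (m + y2)^-1) <= e1 + e2.
Proof.
move=> q0 m0 x10 x20 h1 h2 h3 h4 h5.
rewrite mulrA ler_pdivrMr //.
have : 0 <= (y1 - y2) * (q * m - e1) by apply: mulr_ge0; lra.
have : 0 <= (e2 - q * y1) * (m + y2) by apply: mulr_ge0; lra.
have : 0 <= (q * y2 - e3) * (m + y1) by apply: mulr_ge0; lra.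
nra.
Qed.

Lemma fin_ex {x : \bar R} {a b : R} : (a%:E <= x)%E -> (x <= b%:E)%E ->
  exists2 r : R, x = r%:E & a <= r.
Proof. by case: x => [r| |] //= h1 h2; exists r => //; rewrite -lee_fin. Qed.
Lemma ln2_gt0 : 0 < ln (2 : R). Proof. by apply: ln_gt0; lra. Qed.
Lemma pow2E (r : R) : 2 `^ r = expR (r * ln 2).
Proof. by rewrite /powR pnatr_eq0. Qed.
Lemma ge_log2 (y r : R) : 0 < y -> (log2 y <= r) = (y <= 2 `^ r).
Proof.
move=> y0; rewrite /log2 pow2E ler_pdivrMr ?ln2_gt0 //.
by rewrite -[in LHS]ler_expR lnK // posrE.
Qed.
Lemma le_log2 (y r : R) : 0 < y -> (r <= log2 y) = (2 `^ r <= y).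
Proof.
move=> y0; rewrite /log2 pow2E ler_pdivlMr ?ln2_gt0 //.
by rewrite -[in LHS]ler_expR lnK // posrE.
Qed.
Lemma lt_log2 (y r : R) : 0 < y -> (log2 y < r) = (y < 2 `^ r).
Proof. by move=> y0; rewrite ltNge le_log2 // -ltNge. Qed.
Lemma gt_log2 (y r : R) : 0 < y -> (r < log2 y) = (2 `^ r < y).
Proof. by move=> y0; rewrite ltNge ge_log2 // -ltNge. Qed.
Lemma pow2_ge1 (r : R) : 0 <= r -> 1 <= 2 `^ r.
Proof.
move=> r0; rewrite pow2E; apply: le_trans (expR_ge1Dx _).
have := ln2_gt0; have : 0 <= r * ln 2 by apply: mulr_ge0 => //; exact: ltW ln2_gt0.
lra.
Qed.
Lemma pow2_0 : 2 `^ 0 = 1 :> R.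
Proof. by rewrite powRr0. Qed.
End Helpers.

Section Quant.
Context {d : measure_display} {T : measurableType d} {R : realType} (P : probability T R).

Lemma pre_meas (Y : T -> R) (mY : measurable_fun setT Y) (A : set R) :
  measurable A -> measurable (Y @^-1` A).
Proof. by move=> mA; rewrite -(setTI (Y @^-1` A)); exact: mY. Qed.

Lemma mle (Y : T -> R) (mY : measurable_fun setT Y) c :
  measurable [set w | Y w <= c].
Proof.
have -> : [set w | Y w <= c] = Y @^-1` `]-oo, c].
  by apply/seteqP; split => w /=; rewrite in_itv.
exact: pre_meas.
Qed.

Lemma mge (Y : T -> R) (mY : measurable_fun setT Y) c :
  measurable [set w | c <= Y w].
Proof.
have -> : [set w | c <= Y w] = Y @^-1` `[c, +oo[.
  by apply/seteqP; split => w /=; rewrite in_itv /= andbT.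
exact: pre_meas.
Qed.

Lemma mlt (Y : T -> R) (mY : measurable_fun setT Y) c :
  measurable [set w | Y w < c].
Proof.
have -> : [set w | Y w < c] = Y @^-1` `]-oo, c[.
  by apply/seteqP; split => w /=; rewrite in_itv.
exact: pre_meas.
Qed.

Lemma QL (Y : {RV P >-> R}) (f : R -> R) (e : R) :
  is_density Y f -> (forall w, 0 <= Y w) -> 0 < e -> e < 1 ->
  [/\ 0 <= quantile Y e, (P [set w | (Y w <= quantile Y e)%R] <= e%:E)%E &
      (e%:E <= P [set w | (Y w < quantile Y e)%R])%E].
Proof.
move=> [f0 mf Hf] Y0 e0 e1.
have mY : measurable_fun setT Y := measurable_funPT Y.
have atom x : P [set w | Y w = x] = 0%E.
  have -> : [set w | Y w = x] = Y @^-1` [set x] by [].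
  by rewrite Hf //; exact: integral_set1.
have cdfE x : cdf Y x = P [set w | Y w <= x].
  rewrite /cdf /distribution /pushforward /=; congr (P _).
  all: try by apply/seteqP; split => w /=; rewrite in_itv.
set q := quantile Y e.
set Sq := [set x | (e%:E <= cdf Y x)%E].
have qE : q = inf Sq by [].
have ne : Sq !=set0.
  case: (pselect (exists x, (e%:E <= cdf Y x)%E)) => [[x hx]|no]; first by exists x.
  exfalso.
  have : (1 <= e%:E)%E.
    apply: (@cvg_le_ev R _ _ _ (cdf Y) 1%E e%:E (cvg_cdfy1 Y)); apply: nearW => x.
    by apply/ltW; rewrite ltNge; apply/negP => h; apply: no; exists x.
  by rewrite lee_fin leNgt e1.
have [x0 hx0] : exists x0, (cdf Y x0 < e%:E)%E.
  case: (pselect (exists x, (cdf Y x < e%:E)%E)) => [//|no].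
  exfalso.
  have : (e%:E <= 0)%E.
    apply: (@cvg_ge_ev R _ _ _ (cdf Y) 0%E e%:E (cvg_cdfNy0 Y)); apply: nearW => x.
    by rewrite leNgt; apply/negP => h; apply: no; exists x.
  by rewrite lee_fin leNgt e0.
have lbS : has_lbound Sq.
  exists x0 => y Sy; rewrite leNgt; apply/negP => yx.
  have := lt_le_trans (le_lt_trans (cdf_nondecreasing Y (ltW yx)) hx0) Sy.
  by rewrite ltxx.
have infP x : x < q -> (cdf Y x < e%:E)%E.
  move=> xq; rewrite ltNge; apply/negP => h.
  by have := ge_inf lbS h; rewrite -qE leNgt xq.
have geP y : q < y -> (e%:E <= cdf Y y)%E.
  move=> qy; have [s Ss sy] := inf_lt ne qy.
  exact: le_trans Ss (cdf_nondecreasing Y (ltW sy)).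
have q0 : 0 <= q.
  rewrite qE; apply: (@lb_le_inf R Sq 0 ne) => y Sy; rewrite leNgt; apply/negP => y0.
  move: Sy; rewrite /Sq /= cdfE.
  have -> : [set w | (Y w <= y)%R] = set0.
    apply/seteqP; split => w //= h.
    by have := le_lt_trans (Y0 w) (le_lt_trans h y0); rewrite ltxx.
  by rewrite measure0 lee_fin leNgt e0.
have cq : (e%:E <= cdf Y q)%E.
  apply: (@cvg_ge_ev R _ (at_right q) (at_right_proper_filter q) (cdf Y) (cdf Y q) e%:E (@cdf_right_continuous _ _ _ P Y q)).
  near=> y; apply: geP; near: y; exact: nbhs_right_gt.
have ltq : (P [set w | (Y w < q)%R] <= e%:E)%E.
  pose F k := [set w | (Y w <= q - (k.+1%:R)^-1)%R].
  have mF k : measurable (F k) by exact: mle.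
  have UF : \bigcup_k F k = [set w | (Y w < q)%R].
    apply/seteqP; split => w /=.
      move=> [k _]; rewrite /F /= => h.
      exact: aux1 h (invS_gt0 k).
    move=> h; exists (Num.Def.trunc ((q - Y w)^-1)) => //; rewrite /F /=.
    have hp : 0 < q - Y w by rewrite subr_gt0.
    have := truncnS_gt ((q - Y w)^-1) => h2.
    have : (((Num.Def.trunc ((q - Y w)^-1)).+1)%:R)^-1 <= q - Y w.
      rewrite -[leRHS]invrK lef_pV2 ?posrE ?invr_gt0 ?ltr0Sn //.
      exact: ltW.
    exact: aux2.
  have hom : {homo F : k m / (k <= m)%N >-> (k <= m)%O}.
    move=> k m km; apply/subsetPset => w; rewrite /F /= => h.
    apply: (le_trans h); rewrite lerD2l lerN2 lef_pV2 ?posrE ?ltr0Sn //.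
    by rewrite ler_nat.
  have := @nondecreasing_cvg_mu _ _ _ P F mF _ hom.
  rewrite UF => /(_ (@mlt Y mY q)) => hc.
  apply: (@cvg_le_ev R _ \oo _ (P \o F) _ e%:E hc); apply: nearW => k /=.
  rewrite /F -cdfE; apply/ltW/infP.
  exact: aux3 (invS_gt0 k).
have eq : [set w | (Y w <= q)%R] = [set w | (Y w < q)%R] `|` [set w | Y w = q].
  apply/seteqP; split => w /=; first by rewrite le_eqVlt => /orP[/eqP ->|->]; [right|left].
  by case => [/ltW|->].
have Pq : P [set w | (Y w <= q)%R] = P [set w | (Y w < q)%R].
  have m1 : measurable [set w | (Y w < q)%R] := @mlt Y mY q.
  have m2 : measurable [set w | Y w = q].
    by have -> : [set w | Y w = q] = Y @^-1` [set q] by []; exact: pre_meas.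
  rewrite eq measureU //; first by rewrite -[in RHS](adde0 (P _)); congr (_ + _)%E; exact: atom.
  apply/seteqP; split => w //= [h1 h2]; by rewrite h2 ltxx in h1.
split => //; first by rewrite Pq.
by rewrite -Pq -cdfE.
Unshelve. all: by end_near.
Qed.

Lemma PEx {A : set T} : measurable A -> exists2 m : R, P A = m%:E & 0 <= m.
Proof.
move=> mA; exists (fine (P A)); first by rewrite fineK // fin_num_measure.
exact: fine_ge0.
Qed.

Lemma measure_split {A C : set T} : measurable A -> measurable C ->
  P A = (P (A `&` C) + P (A `&` ~` C))%E.
Proof.
move=> mA mC; rewrite -measureU //; first by rewrite -setIUr setUCr setIT.
- exact: measurableI.
- by apply: measurableI => //; exact: measurableC.
- by rewrite setIACA setICr setI0.
Qed.

Section YSec.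
Variables (Y : T -> R) (mY : measurable_fun setT Y) (Y0 : forall w, 0 <= Y w).

Let mYE : measurable_fun setT (fun w => (Y w)%:E).
Proof. by apply/measurable_EFinP. Qed.

Lemma int_split {A C : set T} : measurable A -> measurable C ->
  (\int[P]_(w in A) (Y w)%:E = \int[P]_(w in A `&` C) (Y w)%:E
      + \int[P]_(w in A `&` ~` C) (Y w)%:E)%E.
Proof.
move=> mA mC.
rewrite -ge0_integral_setU //; first by rewrite -setIUr setUCr setIT.
- exact: measurableI.
- by apply: measurableI => //; exact: measurableC.
- by apply: measurable_funTS.
- by move=> w _; rewrite lee_fin.
- by rewrite disj_set2E; apply/eqP; rewrite setIACA setICr setI0.
Qed.

Lemma int_le_cst {A : set T} (c : R) : measurable A ->
  (forall w, A w -> Y w <= c) ->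
  (\int[P]_(w in A) (Y w)%:E <= c%:E * P A)%E.
Proof.
move=> mA h; rewrite -integral_cst //; apply: ge0_le_integral => //.
all: first [by move=> w _; rewrite lee_fin | by apply: measurable_funTS
  | by move=> w Aw /=; rewrite lee_fin h].
Qed.

Lemma int_ge_cst {A : set T} (c : R) : measurable A -> 0 <= c ->
  (forall w, A w -> c <= Y w) ->
  (c%:E * P A <= \int[P]_(w in A) (Y w)%:E)%E.
Proof.
move=> mA c0 h; rewrite -integral_cst //; apply: ge0_le_integral => //.
all: first [by move=> w _; rewrite lee_fin | by apply: measurable_funTS
  | by move=> w Aw /=; rewrite lee_fin h].
Qed.

Lemma int_ge0 (A : set T) : (0 <= \int[P]_(w in A) (Y w)%:E)%E.
Proof. by apply: integral_ge0 => w _; rewrite lee_fin. Qed.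

Lemma UP (q : R) (B : set T) : 0 <= q -> measurable B ->
  (0 < P [set w | (q <= Y w)%R])%E -> (P [set w | (q <= Y w)%R] <= P B)%E ->
  (\int[P]_(w in B) (Y w)%:E <= P B * (\int[P]_(w in [set w | (q <= Y w)%R]) (Y w)%:E
      * ((fine (P [set w | (q <= Y w)%R]))^-1)%:E))%E.
Proof.
move=> q0 mB.
set C := [set w | (q <= Y w)%R].
have mC : measurable C := @mge Y mY q.
move=> PC0 PCB.
have [pb Epb pb0] := PEx mB.
have [pc Epc pc0] := PEx mC.
rewrite Epb Epc /= in PC0 PCB *.
rewrite lte_fin in PC0; rewrite lee_fin in PCB.
have pbpos : 0 < pb by exact: lt_le_trans PC0 PCB.
case EC : (\int[P]_(w in C) (Y w)%:E)%E => [u| |]; last first.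
- by have := int_ge0 C; rewrite EC.
- rewrite gt0_mulye ?lte_fin ?invr_gt0 // mulry gtr0_sg // mul1e.
  exact: leey.
have IB := int_split mB mC.
have IC := int_split mC mB; rewrite (setIC C B) EC in IC.
have PB := measure_split mB mC; rewrite Epb in PB.
have PC := measure_split mC mB; rewrite (setIC C B) Epc in PC.
have mBC : measurable (B `&` C) := measurableI _ _ mB mC.
have mBnC : measurable (B `&` ~` C) := measurableI _ _ mB (measurableC mC).
have mCnB : measurable (C `&` ~` B) := measurableI _ _ mC (measurableC mB).
have b1 : (\int[P]_(w in B `&` ~` C) (Y w)%:E <= q%:E * P (B `&` ~` C))%E.
  apply: int_le_cst => // w [_ h]; apply/ltW; rewrite ltNge; exact/negP.
have b2 : (q%:E * P (C `&` ~` B) <= \int[P]_(w in C `&` ~` B) (Y w)%:E)%E.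
  by apply: int_ge_cst => // w [h _].
have b3 : (q%:E * P (B `&` C) <= \int[P]_(w in B `&` C) (Y w)%:E)%E.
  by apply: int_ge_cst => // w [_ h].
have [m Em m0] := PEx mBC.
have [x1 Ex1 x10] := PEx mBnC.
have [x2 Ex2 x20] := PEx mCnB.
rewrite Em Ex1 in PB; rewrite Em Ex2 in PC.
rewrite Ex1 in b1; rewrite Ex2 in b2; rewrite Em in b3.
have h1 : (\int[P]_(w in B `&` C) (Y w)%:E <= u%:E)%E.
  by rewrite IC; apply: leeDl; exact: int_ge0.
have [e1 Ee1 _] := fin_ex (int_ge0 (B `&` C)) h1.
have h3 : (\int[P]_(w in C `&` ~` B) (Y w)%:E <= u%:E)%E.
  by rewrite IC; apply: leeDr; exact: int_ge0.
have [e3 Ee3 _] := fin_ex (int_ge0 (C `&` ~` B)) h3.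
have [e2 Ee2 _] := fin_ex (int_ge0 (B `&` ~` C)) b1.
rewrite Ee1 Ee3 in IC; rewrite Ee2 in b1; rewrite Ee3 in b2; rewrite Ee1 in b3.
rewrite IB Ee1 Ee2.
rewrite -!EFinM -!EFinD in IC PB PC b1 b2 b3 *.
rewrite !lee_fin in b1 b2 b3 *.
case: IC => IC; case: PB => PB; case: PC => PC.
rewrite IC PC PB; apply: (ineqU _ _ _ _ _ _ _ q0 m0 x10 x20 b1 b2 b3); by rewrite -?PC -?PB.
Qed.

Lemma LO (q : R) (A : set T) : 0 <= q -> measurable A ->
  (0 < P [set w | (Y w <= q)%R])%E -> (P [set w | (Y w <= q)%R] <= P A)%E ->
  (P A * ((fine (\int[P]_(w in [set w | (Y w <= q)%R]) (Y w)%:E)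
      / fine (P [set w | (Y w <= q)%R]))%:E) <= \int[P]_(w in A) (Y w)%:E)%E.
Proof.
move=> q0 mA.
set D := [set w | (Y w <= q)%R].
have mD : measurable D := @mle Y mY q.
move=> PD0 PDA.
have [pa Epa pa0] := PEx mA.
have [pd Epd pd0] := PEx mD.
rewrite Epa Epd /= in PD0 PDA *.
rewrite lte_fin in PD0; rewrite lee_fin in PDA.
case EA : (\int[P]_(w in A) (Y w)%:E)%E => [a| |]; last first.
- by have := int_ge0 A; rewrite EA.
- exact: leey.
have IA := int_split mA mD; rewrite EA in IA.
have ID := int_split mD mA; rewrite (setIC D A) in ID.
have PA := measure_split mA mD; rewrite Epa in PA.
have PD := measure_split mD mA; rewrite (setIC D A) Epd in PD.
have mAD : measurable (A `&` D) := measurableI _ _ mA mD.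
have mAnD : measurable (A `&` ~` D) := measurableI _ _ mA (measurableC mD).
have mDnA : measurable (D `&` ~` A) := measurableI _ _ mD (measurableC mA).
have b1 : (q%:E * P (A `&` ~` D) <= \int[P]_(w in A `&` ~` D) (Y w)%:E)%E.
  apply: int_ge_cst => // w [_ h]; apply/ltW; rewrite ltNge; exact/negP.
have b2 : (\int[P]_(w in D `&` ~` A) (Y w)%:E <= q%:E * P (D `&` ~` A))%E.
  by apply: int_le_cst => // w [h _].
have b3 : (\int[P]_(w in A `&` D) (Y w)%:E <= q%:E * P (A `&` D))%E.
  by apply: int_le_cst => // w [_ h].
have [m Em m0] := PEx mAD.
have [y1 Ey1 y10] := PEx mAnD.
have [y2 Ey2 y20] := PEx mDnA.
rewrite Em Ey1 in PA; rewrite Em Ey2 in PD.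
rewrite Ey1 in b1; rewrite Ey2 in b2; rewrite Em in b3.
rewrite -EFinM in b3; rewrite -EFinM in b2.
have [e1 Ee1 _] := fin_ex (int_ge0 (A `&` D)) b3.
have [e3 Ee3 _] := fin_ex (int_ge0 (D `&` ~` A)) b2.
have h2 : (\int[P]_(w in A `&` ~` D) (Y w)%:E <= a%:E)%E.
  by rewrite IA; apply: leeDr; exact: int_ge0.
have [e2 Ee2 _] := fin_ex (int_ge0 (A `&` ~` D)) h2.
rewrite Ee1 Ee2 in IA; rewrite Ee2 in b1; rewrite Ee3 in b2; rewrite Ee1 in b3.
rewrite ID Ee1 Ee3.
rewrite -!EFinM -!EFinD in IA PA PD b1 *.
rewrite !lee_fin in b1 b2 b3 *.
case: IA => IA; case: PA => PA; case: PD => PD.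
rewrite IA PD PA /=; apply: (ineqL _ _ _ _ _ _ _ q0 m0 y10 y20 b1 b2 b3);
  by rewrite -?PD -?PA.
Qed.

End YSec.
End Quant.

Theorem theorem3 (d : measure_display) (T : measurableType d) (R : realType)
    (P : probability T R) (n : nat) (rho eps : R)
    (X : 'I_n -> {RV P >-> R}) (f : 'I_n -> R -> R) :
  (2 <= n)%N -> 0 < rho -> 0 < eps < 1 ->
  (forall i w, 0 <= X i w) ->
  (forall i, is_density (X i) (f i)) ->
  (forall i, monotone_density (f i)) ->
  (elog2 (1 - rho%:E * Phi_minus X (1 - eps)) <= (outage_capacity X rho eps)%:E
   /\ (outage_capacity X rho eps)%:E <= elog2 (1 + rho%:E * Phi X eps))%E.
Proof.
move=> n2 rho0 /andP[e0 e1] X0 Hd _.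
pose S w := \sum_(i < n) X i w.
have mX i : measurable_fun setT (X i) := measurable_funPT (X i).
have mS : measurable_fun setT S by apply: measurable_sum => i; exact: mX.
have S0 w : 0 <= S w by apply: sumr_ge0 => i _; exact: X0.
have mSE : measurable_fun setT (fun w => (S w)%:E) by apply/measurable_EFinP.
have QLi i := @QL _ _ _ P (X i) (f i) eps (Hd i) (X0 i) e0 e1.
have q0 i : 0 <= quantile (X i) eps by case: (QLi i).
have PDle i : (P [set w | (X i w <= quantile (X i) eps)%R] <= eps%:E)%E
  by case: (QLi i).
have PLge i : (eps%:E <= P [set w | (X i w < quantile (X i) eps)%R])%E
  by case: (QLi i).
have PD0 i : (0 < P [set w | (X i w <= quantile (X i) eps)%R])%E.
  apply: (lt_le_trans _ (le_trans (PLge i) _)); first by rewrite lte_fin.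
  apply: le_measure; rewrite ?inE; [exact: mlt|exact: mle|by move=> w /= /ltW].
have compl (Y : T -> R) (c : R) :
    [set w | (c <= Y w)%R] = ~` [set w | (Y w < c)%R].
  apply/seteqP; split => w /=; first by rewrite leNgt => /negP.
  by move/negP; rewrite -leNgt.
have PCE i : P [set w | (quantile (X i) eps <= X i w)%R]
    = (1 - P [set w | (X i w < quantile (X i) eps)%R])%E.
  by rewrite compl probability_setC //; exact: mlt.
have PC0 i : (0 < P [set w | (quantile (X i) eps <= X i w)%R])%E.
  rewrite PCE.
  have [c Ec _] := PEx P (@mlt _ _ _ (X i) (mX i) (quantile (X i) eps)).
  have [c' Ec' _] := PEx P (@mle _ _ _ (X i) (mX i) (quantile (X i) eps)).
  have h : (c <= c')%R.
    rewrite -lee_fin -Ec -Ec'; apply: le_measure; rewrite ?inE;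
      [exact: mlt|exact: mle|by move=> w /= /ltW].
  have := PDle i; rewrite Ec' lee_fin => h2.
  rewrite Ec -EFinB lte_fin; lra.
have KU t : 0 <= t -> (P [set w | (S w < t)%R] < eps%:E)%E ->
    (t%:E <= Phi X eps)%E.
  move=> t0 Pt.
  set B := [set w | (t <= S w)%R].
  have mB : measurable B := @mge _ _ _ S mS t.
  have [a Ea a0] := PEx P (@mlt _ _ _ S mS t).
  have PBE : P B = (1 - a)%:E by rewrite /B compl probability_setC ?Ea //; exact: mlt.
  rewrite Ea lte_fin in Pt.
  have PCB i : (P [set w | (quantile (X i) eps <= X i w)%R] <= P B)%E.
    rewrite PCE PBE.
    have [c Ec _] := PEx P (@mlt _ _ _ (X i) (mX i) (quantile (X i) eps)).
    have := PLge i; rewrite Ec lee_fin -EFinB lee_fin => h; lra.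
  have UPi i := @UP _ _ _ P (X i) (mX i) (X0 i) _ B (q0 i) mB (PC0 i) (PCB i).
  have H1 : (t%:E * P B <= \int[P]_(w in B) (S w)%:E)%E.
    rewrite -integral_cst //; apply: ge0_le_integral => //.
    all: first [by move=> w _; rewrite lee_fin | by apply: measurable_funTS
      | by move=> w Bw /=; rewrite lee_fin | idtac].
  have H2 : (\int[P]_(w in B) (S w)%:E
      = \sum_(i < n) \int[P]_(w in B) (X i w)%:E)%E.
    transitivity (\int[P]_(w in B) (\sum_(i < n) (X i w)%:E))%E.
      by apply: eq_integral => w _; rewrite sumEFin.
    apply: ge0_integral_sum => //.
    - by move=> i; apply/measurable_EFinP; apply: measurable_funTS.
    - by move=> i w _; rewrite lee_fin.
  have H3 : (\sum_(i < n) \int[P]_(w in B) (X i w)%:E <= P B * Phi X eps)%E.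
    rewrite /Phi ge0_sume_distrr; last first.
      move=> i _; rewrite /cond_exp_ge /=; apply: mule_ge0; first exact: int_ge0.
      by rewrite lee_fin invr_ge0 fine_ge0 // measure_ge0.
    by apply: lee_sum => i _; exact: UPi.
  have := le_trans H1 (eq_ind_r (fun x => (x <= _)%E) H3 H2).
  by rewrite PBE muleC lee_pmul2l // lte_fin; lra.
pose L := \sum_(i < n) (fine (\int[P]_(w in [set w | (X i w <= quantile (X i) eps)%R]) (X i w)%:E)
      / fine (P [set w | (X i w <= quantile (X i) eps)%R])).
have l0 i : 0 <= fine (\int[P]_(w in [set w | (X i w <= quantile (X i) eps)%R]) (X i w)%:E)
      / fine (P [set w | (X i w <= quantile (X i) eps)%R]).
  by apply: divr_ge0; apply: fine_ge0; [exact: int_ge0|exact: measure_ge0].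
have L0 : 0 <= L by apply: sumr_ge0 => i _; exact: l0.
have KL t : (eps%:E <= P [set w | (S w < t)%R])%E -> L <= t.
  move=> Pt.
  set A := [set w | (S w < t)%R].
  have mA : measurable A := @mlt _ _ _ S mS t.
  have PDA i : (P [set w | (X i w <= quantile (X i) eps)%R] <= P A)%E.
    exact: le_trans (PDle i) Pt.
  have [a Ea a0] := PEx P mA.
  have apos : 0 < a by rewrite -lte_fin -Ea (lt_le_trans _ Pt) // lte_fin.
  have LOi i := @LO _ _ _ P (X i) (mX i) (X0 i) _ A (q0 i) mA (PD0 i) (PDA i).
  have H1 : (\int[P]_(w in A) (S w)%:E <= t%:E * P A)%E.
    rewrite -integral_cst //; apply: ge0_le_integral => //.
    all: first [by move=> w _; rewrite lee_fin | by apply: measurable_funTS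
      | by move=> w Aw /=; rewrite lee_fin ltW | idtac].
  have H2 : (\int[P]_(w in A) (S w)%:E
      = \sum_(i < n) \int[P]_(w in A) (X i w)%:E)%E.
    transitivity (\int[P]_(w in A) (\sum_(i < n) (X i w)%:E))%E.
      by apply: eq_integral => w _; rewrite sumEFin.
    apply: ge0_integral_sum => //.
    - by move=> i; apply/measurable_EFinP; apply: measurable_funTS.
    - by move=> i w _; rewrite lee_fin.
  have H3 : (P A * L%:E <= \sum_(i < n) \int[P]_(w in A) (X i w)%:E)%E.
    rewrite /L -sumEFin ge0_sume_distrr; last by move=> i _; rewrite lee_fin.
    by apply: lee_sum => i _; exact: LOi.
  rewrite -H2 in H3; have := le_trans H3 H1.
  by rewrite Ea -!EFinM lee_fin mulrC ler_pM2r.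
have PhiM : Phi_minus X (1 - eps) = (- L)%:E.
  rewrite /Phi_minus (_ : 1 - (1 - eps) = eps); last by ring.
  rewrite /L -sumrN -sumEFin; apply: eq_bigr => i _.
  rewrite /cond_exp_ge /=.
  have -> : [set w | (- quantile (X i) eps <= - X i w)%R]
      = [set w | (X i w <= quantile (X i) eps)%R].
    by apply/seteqP; split => w /=; rewrite lerN2.
  set D := [set w | (X i w <= quantile (X i) eps)%R].
  have mD : measurable D := @mle _ _ _ (X i) (mX i) _.
  have -> : (fun w => (- X i w)%:E) = (fun w => - (X i w)%:E)%E.
    by apply/funext => w; rewrite EFinN.
  have Hneg : (\int[P]_(w in D) (fun w => (X i w)%:E)^\- w = 0)%E.
    rewrite -(integral0 P D); apply: eq_integral; apply: ge0_funenegE => w _.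
    by rewrite lee_fin.
  rewrite integralN; last by rewrite Hneg oppe0 fin_num_adde_defl.
  have [pd Epd pd0] := PEx P mD.
  have b : (\int[P]_(w in D) (X i w)%:E <= (quantile (X i) eps * pd)%:E)%E.
    rewrite EFinM -Epd; apply: int_le_cst => //; exact: mX.
  have [e Ee _] := fin_ex (int_ge0 P (X i) (X0 i) D) b.
  by rewrite Ee Epd /= -EFinM mulNr.
have [N HN] : exists N : nat, (eps%:E <= P [set w | (S w < N%:R)%R])%E.
  case: (pselect (exists N : nat, (eps%:E <= P [set w | (S w < N%:R)%R])%E)) => // no.
  exfalso.
  pose F (k : nat) := [set w | (S w < k%:R)%R].
  have mF k : measurable (F k) := @mlt _ _ _ S mS _.
  have UF : \bigcup_k F k = setT.
    apply/seteqP; split => // w _; exists (Num.Def.trunc (S w)).+1 => //.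
    exact: truncnS_gt.
  have hom : {homo F : k m / (k <= m)%N >-> (k <= m)%O}.
    move=> k m km; apply/subsetPset => w; rewrite /F /= => h.
    by apply: (lt_le_trans h); rewrite ler_nat.
  have := @nondecreasing_cvg_mu _ _ _ P F mF _ hom.
  rewrite UF => /(_ measurableT) hc.
  have : (P setT <= eps%:E)%E.
    apply: (@cvg_le_ev R _ \oo _ (P \o F) _ _ hc); apply: nearW => k /=.
    by apply/ltW; rewrite ltNge; apply/negP => h; apply: no; exists k.
  by rewrite probability_setT lee_fin; lra.
pose pw r := (2 `^ r - 1) / rho.
set E := [set r | 0 <= r /\ (P [set w | (S w < pw r)%R] < eps%:E)%E].
have OE : outage_capacity X rho eps = sup E by [].
rewrite OE.
have E0 : E 0.
  split => //; rewrite /pw pow2_0 subrr mul0r.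
  have -> : [set w | (S w < 0)%R] = set0.
    by apply/seteqP; split => // w /=; rewrite ltNge S0.
  by rewrite measure0 lte_fin.
have pw0 r : 0 <= r -> 0 <= pw r.
  move=> r0; apply: divr_ge0; last exact: ltW.
  by rewrite subr_ge0; exact: pow2_ge1.
split.
- rewrite PhiM -EFinM -EFinB /= lee_fin.
  have y0 : 0 < 1 - rho * - L by have := mulr_ge0 (ltW rho0) L0; lra.
  have hsup : has_sup E.
    split; first by exists 0.
    exists (log2 (1 + rho * N%:R)) => r [r0 Pr].
    have yN : 0 < 1 + rho * N%:R.
      by have := mulr_ge0 (ltW rho0) (ler0n R N); lra.
    rewrite le_log2 //; rewrite leNgt; apply/negP => h.
    have hN : (N%:R < pw r)%R.
      by rewrite /pw ltr_pdivlMr //; nra.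
    have : (P [set w | (S w < N%:R)%R] <= P [set w | (S w < pw r)%R])%E.
      apply: le_measure; rewrite ?inE; [exact: mlt|exact: mlt|].
      by move=> w /= /lt_trans; apply.
    move=> /(le_trans HN) h3.
    by have := lt_le_trans Pr h3; rewrite ltxx.
  rewrite leNgt; apply/negP => hlt.
  have sup0 : 0 <= sup E := sup_upper_bound hsup E0.
  pose r := (sup E + log2 (1 - rho * - L)) / 2.
  have Er : E r.
    split; first by rewrite /r; lra.
    rewrite ltNge; apply/negP => h.
    have := KL _ h => Lle.
    have : r < log2 (1 - rho * - L) by rewrite /r; lra.
    rewrite gt_log2 // => h2.
    have : pw r < L by rewrite /pw ltr_pdivrMr //; nra.
    lra.
  have := sup_upper_bound hsup Er.
  rewrite /r; lra.
- have Phi0 : (0 <= Phi X eps)%E.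
    apply: sume_ge0 => i _; rewrite /cond_exp_ge /=; apply: mule_ge0.
      exact: int_ge0.
    by rewrite lee_fin invr_ge0 fine_ge0 // measure_ge0.
  case EP : (Phi X eps) => [U| |]; last by rewrite EP in Phi0.
  + rewrite EP lee_fin in Phi0.
    rewrite -EFinM -EFinD /= lee_fin.
    apply: ge_sup; first by exists 0.
    move=> r [r0 Pr].
    have y0 : 0 < 1 + rho * U by have := mulr_ge0 (ltW rho0) Phi0; lra.
    rewrite le_log2 // leNgt; apply/negP => h.
    have := KU _ (pw0 _ r0) Pr; rewrite EP lee_fin => h2.
    have : U < pw r by rewrite /pw ltr_pdivlMr //; nra.
    lra.
  + rewrite mulry gtr0_sg // mul1e addey //=.
    exact: leey.
Qed.
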